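(* Let $n\ge 3$. The map $\phi_n:|\mathcal K_n|\to\mathbb{R}^n$ is a piecewise linear homeomorphism of $|\mathcal K_n|\cong\partial(W_n^\circ)$ onto the boundary sphere $\partial(Root_n)$. It maps the vertex set of $\mathcal K_n$ bijectively onto the vertex set $\{e_i-e_j: i\neq j\}$ of $Root_n$, and the images of the simplices of $\mathcal K_n$ form a triangulation (without new vertices) of $\partial(Root_n)$, in which every face of $Root_n$ is triangulated by images of simplices of $\mathcal K_n$.
   Context: Identify $[n]$ with the vertices of a regular $n$-gon in $S^1$, labelled counterclockwise, with counterclockwise order $\preceq$; for $a\ne b\in[n]$, $[a,b)=\{z\in S^1:a\preceq z\prec b\}$. A finite collection of such arcs is admissible if any two distinct members $I,J$ are either intersecting and strictly nested, or disjoint with the sink of neither equal to the source of the other. $\mathcal K_n$ is the simplicial complex on the $n(n-1)$ arcs $[i,j)$, $i\neq j$, whose simplices are the nonempty admissible families; it is isomorphic to the boundary complex of the polar dual $W_n^\circ$ of the $(n-1)$-dimensional cyclohedron $W_n$. $Root_n=\mathrm{Conv}\{e_i-e_j:1\le i\ne j\le n\}\subset H_0=\{x\in\mathbb{R}^n:\sum x_i=0\}$, boundary relative to $H_0$. $\phi_n$ is affine on each simplex of $\mathcal K_n$ and sends $[i,j)$ to $e_i-e_j$. *)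

(* Defs.v *)
From HB Require Import structures.
From mathcomp Require Import all_boot all_order all_algebra.
Set Implicit Arguments. Unset Strict Implicit. Unset Printing Implicit Defensive.
Import Order.TTheory GRing.Theory Num.Theory.

(* Vertices of the regular n-gon: 'I_n, labelled counterclockwise.
   An arc [i,j) (i <> j) is the pair (i,j) with i != j.                  *)
Definition carc (n : nat) := {p : 'I_n * 'I_n | p.1 != p.2}.
HB.instance Definition _ (n : nat) := Finite.on (carc n).


Definition src n (a : carc n) : 'I_n := (val a).1.
Definition snk n (a : carc n) : 'I_n := (val a).2.

Definition ccw n (i k : 'I_n) : nat := ((k + n - i) %% n)%N.

(* The arc [i,j) = {z in S^1 : i <= z < j} (counterclockwise) is the union of
   the unit edges [k,k+1) of the n-gon for k = i, i+1, ..., j-1 (mod n);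
   it is encoded by this set of vertices k (set inclusion, intersection and
   disjointness of arcs coincide with those of these sets).                *)
Definition arcset n (a : carc n) : {set 'I_n} :=
  [set k : 'I_n | (ccw (src a) k < ccw (src a) (snk a))%N].

Definition compatible n (I J : carc n) : bool :=
  [|| (arcset I \proper arcset J) && (arcset I :&: arcset J != set0),
      (arcset J \proper arcset I) && (arcset I :&: arcset J != set0)
    | [&& [disjoint arcset I & arcset J], snk I != src J & snk J != src I]].

Definition admissible n (S : {set carc n}) : bool :=
  [forall I in S, forall J in S, (I != J) ==> compatible I J].

Definition simplex n (S : {set carc n}) : bool := (S != set0) && admissible S.

Local Open Scope ring_scope.

Definition evec (R : rcfType) n (i : 'I_n) : 'rV[R]_n := delta_mx ord0 i.

Definition phiv (R : rcfType) n (a : carc n) : 'rV[R]_n :=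
  evec R (src a) - evec R (snk a).

(* Barycentric coordinates on the vertex set of K_n. *)
Definition coords (R : rcfType) n := {ffun carc n -> R}.

Definition supp (R : rcfType) n (l : coords R n) : {set carc n} :=
  [set a | l a != 0].

Definition convex_coef (R : rcfType) n (l : coords R n) : Prop :=
  (forall a, 0 <= l a) /\ \sum_a l a = 1.

(* The geometric realization |K_n| (standard realization in R^{arcs}):
   convex combinations whose support is a simplex of K_n.                 *)
Definition inRealization (R : rcfType) n (l : coords R n) : Prop :=
  convex_coef l /\ simplex (supp l).

Definition inSimplexPts (R : rcfType) n (S : {set carc n}) (l : coords R n)
  : Prop := convex_coef l /\ supp l \subset S.

Definition phi (R : rcfType) n (l : coords R n) : 'rV[R]_n :=
  \sum_a l a *: phiv R a.

Definition inImage (R : rcfType) n (S : {set carc n}) (x : 'rV[R]_n) : Prop :=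
  exists l : coords R n, inSimplexPts S l /\ phi l = x.

Definition inH0 (R : rcfType) n (x : 'rV[R]_n) : Prop := \sum_k x 0 k = 0.

Definition inRoot (R : rcfType) n (x : 'rV[R]_n) : Prop :=
  exists mu : coords R n, convex_coef mu /\ x = \sum_a mu a *: phiv R a.

(* Relative interior of Root_n in H_0 (balls for the sup norm). *)
Definition inRelInt (R : rcfType) n (x : 'rV[R]_n) : Prop :=
  exists2 eps : R, 0 < eps &
    forall y : 'rV[R]_n, inH0 y -> (forall k, `|y 0 k - x 0 k| < eps) ->
      inRoot y.

Definition inBoundary (R : rcfType) n (x : 'rV[R]_n) : Prop :=
  inRoot x /\ ~ inRelInt x.

Definition isVertexRoot (R : rcfType) n (x : 'rV[R]_n) : Prop :=
  inRoot x /\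
  forall (y z : 'rV[R]_n) (t : R), inRoot y -> inRoot z -> 0 < t -> t < 1 ->
    x = t *: y + (1 - t) *: z -> y = x /\ z = x.

Definition dotv (R : rcfType) n (c x : 'rV[R]_n) : R := \sum_k c 0 k * x 0 k.

(* Proper (nonempty-or-empty) face of Root_n cut out by a supporting
   hyperplane {c.x = b} with c.y <= b on Root_n, not containing all of Root_n. *)
Definition supportingProper (R : rcfType) n (c : 'rV[R]_n) (b : R) : Prop :=
  (forall y, inRoot y -> dotv c y <= b) /\ (exists y, inRoot y /\ dotv c y < b).

Definition inFace (R : rcfType) n (c : 'rV[R]_n) (b : R) (x : 'rV[R]_n)
  : Prop := inRoot x /\ dotv c x = b.

(* Main.v *)
Require Import Defs.
From HB Require Import structures.
From mathcomp Require Import all_boot all_order all_algebra.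
From mathcomp Require Import zify ring lra.
Set Implicit Arguments. Unset Strict Implicit. Unset Printing Implicit Defensive.
Import Order.TTheory GRing.Theory Num.Theory.
Lemma ordS_val n (k : 'I_n) : (ordS k : nat) = if k.+1 == n then 0%N else k.+1.
Proof.
rewrite /ordS /=; have := ltn_ord k; case: eqP => [->|h] hk; first by rewrite modnn.
by rewrite modn_small //; lia.
Qed.

Lemma ord_pred_val n (k : 'I_n) : (ord_pred k : nat) = if k == 0 :> nat then n.-1 else k.-1.
Proof.
rewrite /ord_pred /=; have := ltn_ord k; case: eqP => [->|h] hk.
  by rewrite add0n modn_small //; lia.
have -> : (k + n).-1 = k.-1 + n by lia.
by rewrite modnDr modn_small //; lia.
Qed.

Lemma ccwE n (i k : 'I_n) : ccw i k = if (i <= k)%N then (k - i)%N else (k + n - i)%N.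
Proof.
rewrite /ccw; have := ltn_ord k; have := ltn_ord i; case: (leqP i k) => h hi hk.
  have -> : (k + n - i = (k - i) + n)%N by lia.
  by rewrite modnDr modn_small //; lia.
by rewrite modn_small //; lia.
Qed.

Lemma mem_arc n (a : carc n) k :
  (k \in arcset a) = (ccw (src a) k < ccw (src a) (snk a))%N.
Proof. by rewrite inE. Qed.

Lemma src_snk_neq n (a : carc n) : (src a : nat) != snk a.
Proof. by case: a => [[i j]] /= h; rewrite /src /snk /=. Qed.

Lemma ord_eqE n (i j : 'I_n) : (i == j) = ((i : nat) == j).
Proof. by []. Qed.

Ltac arcs := rewrite ?ord_eqE ?mem_arc ?ccwE ?ordS_val ?ord_pred_val.


Ltac arcfin := repeat case: ifP; move=> *; lia.

Lemma ordS_out n (a : carc n) (k : 'I_n) :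
  k \in arcset a -> ordS k \notin arcset a -> ordS k = snk a.
Proof.
move=> h1 h2; apply/eqP; move: h1 h2; arcs.
have := ltn_ord k; have := ltn_ord (src a); have := ltn_ord (snk a); have := src_snk_neq a.
arcfin.
Qed.

Lemma ordS_in n (a : carc n) (k : 'I_n) :
  k \notin arcset a -> ordS k \in arcset a -> ordS k = src a.
Proof.
move=> h1 h2; apply/eqP; move: h1 h2; arcs.
have := ltn_ord k; have := ltn_ord (src a); have := ltn_ord (snk a); have := src_snk_neq a.
arcfin.
Qed.

Lemma src_in n (a : carc n) : src a \in arcset a.
Proof.
arcs; have := ltn_ord (src a); have := ltn_ord (snk a); have := src_snk_neq a. arcfin.
Qed.

Lemma snk_out n (a : carc n) : snk a \notin arcset a.
Proof.
arcs; have := ltn_ord (src a); have := ltn_ord (snk a); have := src_snk_neq a. arcfin.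
Qed.

Lemma pred_src_out n (a : carc n) : ord_pred (src a) \notin arcset a.
Proof.
arcs; have := ltn_ord (src a); have := ltn_ord (snk a); have := src_snk_neq a. arcfin.
Qed.

Lemma pred_snk_in n (a : carc n) : ord_pred (snk a) \in arcset a.
Proof.
arcs; have := ltn_ord (src a); have := ltn_ord (snk a); have := src_snk_neq a. arcfin.
Qed.

Lemma src_char n (a : carc n) (k : 'I_n) :
  (k \in arcset a) && (ord_pred k \notin arcset a) = (k == src a).
Proof.
apply/idP/idP.
  case/andP; arcs.
  have := ltn_ord k; have := ltn_ord (src a); have := ltn_ord (snk a); have := src_snk_neq a.
  arcfin.
move/eqP->; by rewrite src_in pred_src_out.
Qed.

Lemma snk_char n (a : carc n) (k : 'I_n) :
  (k \notin arcset a) && (ord_pred k \in arcset a) = (k == snk a).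
Proof.
apply/idP/idP.
  case/andP; arcs.
  have := ltn_ord k; have := ltn_ord (src a); have := ltn_ord (snk a); have := src_snk_neq a.
  arcfin.
move/eqP->; by rewrite snk_out pred_snk_in.
Qed.

Lemma arcset_inj n (a b : carc n) : arcset a = arcset b -> a = b.
Proof.
move=> e.
have hs : src a = src b.
  apply/eqP; rewrite -src_char -e src_char //.
have ht : snk a = snk b.
  apply/eqP; rewrite -snk_char -e snk_char //.
apply/val_inj; move: hs ht; rewrite /src /snk; case: (val a) => ??; case: (val b) => ?? /= -> -> //.
Qed.

Lemma ccw_lt n (i k : 'I_n) : (ccw i k < n)%N.
Proof. arcs; have := ltn_ord k; have := ltn_ord i; arcfin. Qed.

Lemma ccw_inj n (i k k' : 'I_n) : ccw i k = ccw i k' -> k = k'.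
Proof.
move=> h; apply/eqP; move: h; arcs.
have := ltn_ord k; have := ltn_ord k'; have := ltn_ord i; arcfin.
Qed.

Lemma ccw_id n (i : 'I_n) : ccw i i = 0%N.
Proof. arcs; rewrite leqnn; lia. Qed.

Lemma ccw_pred n (z k : 'I_n) : k != z -> ccw z (ord_pred k) = (ccw z k).-1.
Proof.
arcs; have := ltn_ord k; have := ltn_ord z; arcfin.
Qed.

Lemma ordS_predK n (k : 'I_n) : ordS (ord_pred k) = k.
Proof. exact: ord_predK. Qed.

Lemma crossing n (a : carc n) (X : {set 'I_n}) :
  arcset a :&: X != set0 -> ~~ (arcset a \subset X) ->
  exists k, [/\ k \in arcset a, ordS k \in arcset a & (k \in X) != (ordS k \in X)].
Proof.
move=> hne hns.
case: (boolP [exists k, [&& k \in arcset a, ordS k \in arcset a & (k \in X) != (ordS k \in X)]]).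
  by case/existsP=> k /and3P[*]; exists k.
move/existsPn=> H.
have key : forall t k, ccw (src a) k = t -> k \in arcset a -> (k \in X) = (src a \in X).
  elim=> [|t IH] k hk ka.
    by rewrite (@ccw_inj _ (src a) k (src a)) // ccw_id.
  have kns : k != src a by apply/eqP=> e; move: hk; rewrite e ccw_id.
  have hp : ccw (src a) (ord_pred k) = t by rewrite ccw_pred // hk.
  have pa : ord_pred k \in arcset a.
    by move: ka; rewrite !mem_arc hp hk; lia.
  rewrite -(IH _ hp pa).
  have := H (ord_pred k); rewrite pa ordS_predK ka /=.
  by case: (k \in X); case: (ord_pred k \in X).
case/set0Pn: hne => x; rewrite inE => /andP[xa xX].
case/subsetPn: hns => y ya yX.
by move: yX; rewrite (key _ y erefl ya) -(key _ x erefl xa) xX.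
Qed.

Lemma compat_cases n (I J : carc n) : compatible I J ->
  [\/ arcset I \proper arcset J, arcset J \proper arcset I |
   [/\ (forall x, x \in arcset I -> x \in arcset J -> False), snk I != src J & snk J != src I]].
Proof.
case/or3P=> [/andP[h _]|/andP[h _]|/and3P[h1 h2 h3]]; [exact: Or31|exact: Or32|apply: Or33].
split=> // x xI xJ; move: h1; rewrite -setI_eq0 => /eqP h.
have: x \in arcset I :&: arcset J by rewrite inE xI xJ.
by rewrite h inE.
Qed.

Lemma compatC n (I J : carc n) : compatible I J = compatible J I.
Proof.
rewrite /compatible setIC (disjoint_sym (arcset J)).
case: (arcset I \proper arcset J); case: (arcset J \proper arcset I) => //=.
all: by rewrite ?(andbC (snk J != _)) ?orbb // (andbC (snk I != _)).
Qed.

Lemma adm_compat n (T : {set carc n}) I J : admissible T -> I \in T -> J \in T -> I != J ->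
  compatible I J.
Proof. by move=> /forall_inP H iT jT ij; move: (H I iT) => /forall_inP /(_ J jT); rewrite ij. Qed.

Lemma adm_sub n (S T : {set carc n}) : S \subset T -> admissible T -> admissible S.
Proof.
move=> /subsetP sST hT; apply/forall_inP=> I iS; apply/forall_inP=> J jS; apply/implyP.
exact: adm_compat (sST _ iS) (sST _ jS).
Qed.

Lemma arc_nonempty n (a : carc n) : arcset a :&: arcset a != set0.
Proof. by rewrite setIid; apply/set0Pn; exists (src a); exact: src_in. Qed.

Lemma conformal n (T : {set carc n}) b b' : admissible T -> b \in T -> b' \in T ->
  src b = snk b' -> False.
Proof.
move=> hT bT b'T e.
have nb : b != b'.
  by apply/eqP=> ebb; move: (src_snk_neq b); rewrite e ebb eqxx.
case: (compat_cases (adm_compat hT bT b'T nb)).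
- move=> /proper_sub /subsetP h; move: (h _ (src_in b)); rewrite e.
  by rewrite (negbTE (snk_out b')).
- move=> /proper_sub /subsetP h; move: (h _ (pred_snk_in b')); rewrite -e.
  by rewrite (negbTE (pred_src_out b)).
- by case=> _ _; rewrite e eqxx.
Qed.

Local Open Scope ring_scope.
Definition fl (R : rcfType) n (l : coords R n) (k : 'I_n) : R :=
  \sum_(b | k \in arcset b) l b.
Definition Mx (R : rcfType) n (f : 'I_n -> R) (a : carc n) : R :=
  Num.max (f (ord_pred (src a))) (f (snk a)).

Lemma sum_sub (R : numDomainType) (I : finType) (P Q : pred I) (F : I -> R) :
  (forall i, 0 <= F i) -> (forall i, P i -> F i != 0 -> Q i) ->
  \sum_(i | P i) F i <= \sum_(i | Q i) F i.
Proof.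
move=> F0 H; rewrite [X in X <= _]big_mkcond [X in _ <= X]big_mkcond.
apply: ler_sum => i _; case: (boolP (P i)) => Pi; case Qi: (Q i) => //; try exact: F0.
case: (eqVneq (F i) 0) => [->//|/(H _ Pi)]; by rewrite Qi.
Qed.

Lemma in_supp (R : rcfType) n (l : coords R n) a : (a \in supp l) = (l a != 0).
Proof. by rewrite inE. Qed.

Lemma cover_pred_src (R : rcfType) n (l : coords R n) a b : admissible (supp l) ->
  l a != 0 -> l b != 0 -> ord_pred (src a) \in arcset b -> arcset a \proper arcset b.
Proof.
move=> hT ha hb pb.
have nb : b != a by apply/eqP=> e; move: pb; rewrite e (negbTE (pred_src_out a)).
case: (compat_cases (adm_compat hT (_ : b \in supp l) (_ : a \in supp l) nb)); rewrite ?in_supp //.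
- by move=> /proper_sub /subsetP /(_ _ pb); rewrite (negbTE (pred_src_out a)).
- case=> dis h1 h2.
  have sa : src a \notin arcset b by apply/negP=> sb; exact: (dis _ sb (src_in a)).
  by move: (ordS_out pb); rewrite ordS_predK => /(_ sa) e; move: h1; rewrite e eqxx.
Qed.

Lemma cover_snk (R : rcfType) n (l : coords R n) a b : admissible (supp l) ->
  l a != 0 -> l b != 0 -> snk a \in arcset b -> arcset a \proper arcset b.
Proof.
move=> hT ha hb pb.
have nb : b != a by apply/eqP=> e; move: pb; rewrite e (negbTE (snk_out a)).
case: (compat_cases (adm_compat hT (_ : b \in supp l) (_ : a \in supp l) nb)); rewrite ?in_supp //.
- by move=> /proper_sub /subsetP /(_ _ pb); rewrite (negbTE (snk_out a)).
- case=> dis h1 h2.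
  have sa : ord_pred (snk a) \notin arcset b.
    by apply/negP=> sb; exact: (dis _ sb (pred_snk_in a)).
  have := ordS_in sa; rewrite ordS_predK => /(_ pb) e; by move: h2; rewrite e eqxx.
Qed.

Lemma proper_neq n (a b : carc n) : arcset a \proper arcset b -> b != a.
Proof. by move=> h; apply/eqP=> e; move: h; rewrite e properxx. Qed.

Lemma sum_self_proper (R : rcfType) n (l : coords R n) a :
  \sum_(b | (b == a) || (arcset a \proper arcset b)) l b =
  l a + \sum_(b | arcset a \proper arcset b) l b.
Proof.
rewrite (bigD1 a) ?eqxx //=; congr (_ + _); apply: eq_bigl => b.
case: (eqVneq b a) => [->|nba] /=; first by rewrite properxx.
by rewrite andbT.
Qed.

Lemma K1 (R : rcfType) n (l : coords R n) a k : (forall b, 0 <= l b) ->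
  admissible (supp l) -> 0 < l a -> k \in arcset a ->
  l a + Mx (fl l) a <= fl l k.
Proof.
move=> l0 hT la ka.
have la0 : l a != 0 by rewrite gt_eqF.
have h1 : l a + \sum_(b | arcset a \proper arcset b) l b <= fl l k.
  rewrite -sum_self_proper; apply: sum_sub => // b /orP[/eqP-> _ //|/proper_sub /subsetP h _]; exact: h.
apply: le_trans h1; rewrite lerD2l /Mx ge_max; apply/andP; split; apply: sum_sub => // b.
  by move=> pb hb; exact: cover_pred_src hT la0 hb pb.
by move=> pb hb; exact: cover_snk hT la0 hb pb.
Qed.

Lemma card_lt n (b c a : carc n) x : arcset b \proper arcset c -> x \in arcset c ->
  x \in arcset a -> x \notin arcset b ->
  (#|arcset b :&: arcset a| < #|arcset c :&: arcset a|)%N.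
Proof.
move=> bc xc xa xb; apply: proper_card; apply/properP; split.
  by apply: setSI; exact: proper_sub.
by exists x; rewrite in_setI ?xc ?xa ?negb_and ?xb.
Qed.

Lemma uncov (R : rcfType) n (l : coords R n) a : admissible (supp l) ->
  exists2 k, k \in arcset a & forall b, l b != 0 -> k \in arcset b ->
    arcset a \subset arcset b.
Proof.
move=> hT.
case: (boolP [exists k, (k \in arcset a) && [forall b, (l b != 0) && (k \in arcset b) ==>
   (arcset a \subset arcset b)]]).
  case/existsP => k /andP[ka /forallP H]; exists k => // b lb kb.
  by have := H b; rewrite lb kb.
move/existsPn => H.
set C := [set b | (l b != 0) && (arcset b :&: arcset a != set0) && ~~ (arcset a \subset arcset b)].
have covC : forall k, k \in arcset a -> exists2 b, b \in C & k \in arcset b.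
  move=> k ka; move: (H k); rewrite ka /= => /forallPn [b].
  rewrite negb_imply => /andP[/andP[lb kb] ns]; exists b => //.
  rewrite inE lb ns andbT /=; apply/set0Pn; exists k; by rewrite inE kb ka.
case: (covC _ (src_in a)) => b0 b0C _.
case: (arg_maxnP (fun b => #|arcset b :&: arcset a|) b0C) => bm bmC bmax.
have bmC2 : bm \in C := bmC.
have := bmC2; rewrite /C inE => /andP[/andP[lbm nebm] nsbm].
have [k [ka ska dif]] : exists k, [/\ k \in arcset a, ordS k \in arcset a &
    (k \in arcset bm) != (ordS k \in arcset bm)].
  by apply: crossing => //; rewrite setIC.
have inSu : forall b, b \in C -> b \in supp l by move=> b; rewrite inE in_supp => /andP[/andP[-> _] _].
case kb: (k \in arcset bm); case skb: (ordS k \in arcset bm); rewrite ?kb ?skb in dif => //.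
- have e := ordS_out kb (negbT skb).
  case: (covC _ ska) => c cC qc.
  have ncb : c != bm by apply/eqP=> ec; move: qc; rewrite ec skb.
  case: (compat_cases (adm_compat hT (inSu _ cC) (inSu _ bmC2) ncb)).
  + by move=> /proper_sub /subsetP /(_ _ qc); rewrite skb.
  + move=> pbc; have hb : (#|arcset c :&: arcset a| <= #|arcset bm :&: arcset a|)%N := bmax c cC.
    by rewrite leqNgt (card_lt pbc qc ska (negbT skb)) in hb.
  + case=> dis _ h2; case kc: (k \in arcset c); first by case: (dis _ kc kb).
    have := ordS_in (negbT kc) qc => e2; by move: h2; rewrite -e -e2 eqxx.
- have e := ordS_in (negbT kb) skb.
  case: (covC _ ka) => c cC qc.
  have ncb : c != bm by apply/eqP=> ec; move: qc; rewrite ec kb.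
  case: (compat_cases (adm_compat hT (inSu _ cC) (inSu _ bmC2) ncb)).
  + by move=> /proper_sub /subsetP /(_ _ qc); rewrite kb.
  + move=> pbc; have hb : (#|arcset c :&: arcset a| <= #|arcset bm :&: arcset a|)%N := bmax c cC.
    by rewrite leqNgt (card_lt pbc qc ka (negbT kb)) in hb.
  + case=> dis h1 _; case kc: (ordS k \in arcset c); first by case: (dis _ kc skb).
    have := ordS_out qc (negbT kc) => e2; by move: h1; rewrite -e -e2 eqxx.
Qed.

Lemma proper_ends n (a b : carc n) : arcset a \proper arcset b ->
  (ord_pred (src a) \in arcset b) || (snk a \in arcset b).
Proof.
move=> pab.
have [k [kb skb dif]] : exists k, [/\ k \in arcset b, ordS k \in arcset b &
    (k \in arcset a) != (ordS k \in arcset a)].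
  apply: crossing.
    apply/set0Pn; exists (src a); rewrite inE src_in andbT.
    by move: (src_in a); apply/subsetP; exact: proper_sub.
  by move: pab; rewrite properE => /andP[].
case ka: (k \in arcset a); move: dif; rewrite ka /=; [move=> ska|move=> /negbNE ska].
  by rewrite -(ordS_out ka ska) skb orbT.
by move: (ordS_in (negbT ka) ska) => e; rewrite -e ordSK kb.
Qed.

Lemma K2 (R : rcfType) n (l : coords R n) a : (forall b, 0 <= l b) ->
  admissible (supp l) -> exists2 k, k \in arcset a & fl l k <= l a + Mx (fl l) a.
Proof.
move=> l0 hT; case: (uncov a hT) => k ka hk; exists k => //.
have h1 : fl l k <= l a + \sum_(b | arcset a \proper arcset b) l b.
  rewrite -sum_self_proper; apply: sum_sub => // b kb lb.
  case: (eqVneq b a) => [->|nba]; rewrite ?eqxx //=.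
  rewrite properEneq (hk _ lb kb) andbT; apply/eqP=> e.
  by move: nba; rewrite (arcset_inj e) eqxx.
apply: (le_trans h1); rewrite lerD2l.
set p := ord_pred (src a); set j := snk a.
case: (boolP [forall b, (l b != 0) && (arcset a \proper arcset b) ==> (p \in arcset b)]).
  move/forallP=> H; rewrite /Mx le_max; apply/orP; left.
  apply: sum_sub => // b pab lb; by have := H b; rewrite lb pab.
move/forallPn=> [b1]; rewrite negb_imply => /andP[/andP[lb1 pab1] pb1].
have jb1 : j \in arcset b1 by move: (proper_ends pab1); rewrite (negbTE pb1).
rewrite /Mx le_max; apply/orP; right; apply: sum_sub => // b pab lb.
case: (boolP (j \in arcset b)) => // jb.
have pb : p \in arcset b by move: (proper_ends pab); rewrite (negbTE jb) orbF.
have nb : b != b1 by apply/eqP=> e; move: jb; rewrite e jb1.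
case: (compat_cases (adm_compat hT (_ : b \in supp l) (_ : b1 \in supp l) nb));
  rewrite ?in_supp //.
- by move=> /proper_sub /subsetP /(_ _ pb); rewrite (negbTE pb1).
- by move=> /proper_sub /subsetP /(_ _ jb1); rewrite (negbTE jb).
- case=> dis _ _; case: (dis (src a)).
    by move: (src_in a); apply/subsetP; exact: proper_sub pab.
  by move: (src_in a); apply/subsetP; exact: proper_sub pab1.
Qed.

Lemma evecE (R : rcfType) n (i k : 'I_n) : evec R i 0 k = (i == k)%:R.
Proof. by rewrite /evec mxE (eq_sym k); case: (i == k); rewrite ?andbF ?andbT. Qed.

Lemma phivE (R : rcfType) n (a : carc n) k :
  phiv R a 0 k = (src a == k)%:R - (snk a == k)%:R.
Proof. by rewrite /phiv !mxE !(eq_sym k). Qed.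

Lemma phiE (R : rcfType) n (l : coords R n) k :
  phi l 0 k = \sum_a l a * ((src a == k)%:R - (snk a == k)%:R).
Proof.
rewrite /phi summxE; apply: eq_bigr => a _; by rewrite mxE phivE.
Qed.

Lemma flE (R : rcfType) n (l : coords R n) k :
  fl l k = \sum_a l a * (k \in arcset a)%:R.
Proof.
rewrite /fl big_mkcond; apply: eq_bigr => a _.
by case: (k \in arcset a); rewrite ?mulr1 ?mulr0.
Qed.

Lemma flow (R : rcfType) n (l : coords R n) k :
  fl l k - fl l (ord_pred k) = phi l 0 k.
Proof.
rewrite !flE phiE -sumrB; apply: eq_bigr => a _; rewrite -mulrBr; congr (_ * _).
have h1 := src_char a k; have h2 := snk_char a k.
rewrite eq_sym in h1; rewrite eq_sym in h2; rewrite -h1 -h2.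
by case: (k \in arcset a); case: (ord_pred k \in arcset a); rewrite /= ?subrr ?subr0 ?sub0r.
Qed.

Lemma fl_ge0 (R : rcfType) n (l : coords R n) k : (forall b, 0 <= l b) -> 0 <= fl l k.
Proof. by move=> l0; apply: sumr_ge0 => b _; exact: l0. Qed.

Lemma fl_zero (R : rcfType) n (l : coords R n) : (0 < n)%N -> admissible (supp l) ->
  exists u, fl l u = 0.
Proof.
move=> n0 hT.
case: (set_0Vmem (supp l)) => [e|[M0 M0S]].
  exists (Ordinal n0); rewrite /fl big1 // => b _; apply/eqP; apply: contraT => h.
  have: b \in supp l by rewrite in_supp.
  by rewrite e inE.
case: (arg_maxnP (fun b => #|arcset b|) M0S) => M MS Mmax.
have MS2 : M \in supp l := MS.
exists (snk M); rewrite /fl big1 // => b ub; apply/eqP; apply: contraT => lb.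
have lM : l M != 0 by rewrite -in_supp.
have bS : b \in supp l by rewrite in_supp.
have pr := cover_snk hT lM lb ub.
have : (#|arcset b| <= #|arcset M|)%N := Mmax b bS.
by rewrite leqNgt (proper_card pr).
Qed.

Lemma path_bound (R : rcfType) n (g : 'I_n -> R) (k k' : 'I_n) :
  `|g k - g k'| <= \sum_m `|g m - g (ord_pred m)|.
Proof.
set D := fun m => `|g m - g (ord_pred m)|.
have key : forall t k, ccw k' k = t ->
    `|g k - g k'| <= \sum_(m | (0 < ccw k' m <= t)%N) D m.
  elim=> [|t IH] k0 hk.
    have -> : k0 = k' by apply: (@ccw_inj _ k'); rewrite hk ccw_id.
    by rewrite subrr normr0; apply: sumr_ge0 => m _; exact: normr_ge0.
  have kns : k0 != k' by apply/eqP=> e; move: hk; rewrite e ccw_id.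
  have hp : ccw k' (ord_pred k0) = t by rewrite ccw_pred // hk.
  rewrite (bigD1 k0) /=; last by rewrite hk; lia.
  have -> : \sum_(m | (0 < ccw k' m <= t.+1)%N && (m != k0)) D m =
            \sum_(m | (0 < ccw k' m <= t)%N) D m.
    apply: eq_bigl => m; case: (eqVneq m k0) => [->|mk]; first by rewrite hk /=; lia.
    rewrite andbT; have : ccw k' m != t.+1.
      apply/eqP=> e; move: mk; have -> : m = k0 by apply: (@ccw_inj _ k'); rewrite e hk.
      by rewrite eqxx.
    lia.
  apply: (le_trans (_ : _ <= `|g k0 - g (ord_pred k0)| + `|g (ord_pred k0) - g k'|)).
    by have := ler_normD (g k0 - g (ord_pred k0)) (g (ord_pred k0) - g k'); rewrite addrA subrK.
  by rewrite lerD2l; exact: IH.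
apply: (le_trans (key _ k erefl)); apply: sum_sub => // m; rewrite /D //.
Qed.

Lemma fl_close (R : rcfType) n (l1 l2 : coords R n) k : (0 < n)%N ->
  (forall b, 0 <= l1 b) -> (forall b, 0 <= l2 b) ->
  admissible (supp l1) -> admissible (supp l2) ->
  `|fl l1 k - fl l2 k| <= \sum_m `|phi l1 0 m - phi l2 0 m|.
Proof.
move=> n0 h1 h2 a1 a2.
set g := fun k => fl l1 k - fl l2 k.
have hg : forall m, g m - g (ord_pred m) = phi l1 0 m - phi l2 0 m.
  by move=> m; rewrite /g -(flow l1) -(flow l2); ring.
have pb : forall k k', `|g k - g k'| <= \sum_m `|phi l1 0 m - phi l2 0 m|.
  by move=> k0 k'; under eq_bigr do rewrite -hg; exact: path_bound.
case: (fl_zero n0 a1) => u1 hu1; case: (fl_zero n0 a2) => u2 hu2.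
have gu1 : g u1 <= 0 by rewrite /g hu1 sub0r oppr_le0 fl_ge0.
have gu2 : 0 <= g u2 by rewrite /g hu2 subr0 fl_ge0.
have := pb k u1; have := pb k u2.
rewrite -/(g k) ler_norml; rewrite ler_norml => /andP[a b] /andP[c d].
by rewrite ler_norml; apply/andP; split; lra.
Qed.

Lemma Mx_close (R : rcfType) n (f1 f2 : 'I_n -> R) d a :
  (forall k, `|f1 k - f2 k| <= d) -> Mx f2 a <= Mx f1 a + d.
Proof.
move=> H; rewrite /Mx ge_max.
have h1 := H (ord_pred (src a)); have h2 := H (snk a).
move: h1 h2; rewrite !ler_norml => /andP[h1 h1'] /andP[h2 h2'].
have m1 : f1 (ord_pred (src a)) <= Num.max (f1 (ord_pred (src a))) (f1 (snk a)) by rewrite le_max lexx.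
have m2 : f1 (snk a) <= Num.max (f1 (ord_pred (src a))) (f1 (snk a)) by rewrite le_max lexx orbT.
by apply/andP; split; lra.
Qed.

Lemma coef_side (R : rcfType) n (l1 l2 : coords R n) d a :
  (forall b, 0 <= l1 b) -> (forall b, 0 <= l2 b) ->
  admissible (supp l1) -> admissible (supp l2) -> 0 <= d ->
  (forall k, `|fl l1 k - fl l2 k| <= d) -> l1 a <= l2 a + d *+ 2.
Proof.
move=> h1 h2 a1 a2 d0 H.
have := h1 a; rewrite le0r => /orP[/eqP->|la].
  by have := h2 a; lra.
case: (K2 a h2 a2) => k ka hk.
have k1 := K1 h1 a1 la ka.
have mx := Mx_close a H.
have := H k; rewrite ler_norml => /andP[_ hh].
rewrite mulr2n; lra.
Qed.

Lemma coef_close (R : rcfType) n (l1 l2 : coords R n) d a :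
  (forall b, 0 <= l1 b) -> (forall b, 0 <= l2 b) ->
  admissible (supp l1) -> admissible (supp l2) -> 0 <= d ->
  (forall k, `|fl l1 k - fl l2 k| <= d) -> `|l1 a - l2 a| <= d *+ 2.
Proof.
move=> h1 h2 a1 a2 d0 H.
have s1 := coef_side a h1 h2 a1 a2 d0 H.
have H' : forall k, `|fl l2 k - fl l1 k| <= d by move=> k; rewrite distrC.
have s2 := coef_side a h2 h1 a2 a1 d0 H'.
rewrite ler_norml; apply/andP; split; lra.
Qed.

Lemma uniq_coef (R : rcfType) n (l1 l2 : coords R n) : (0 < n)%N ->
  (forall b, 0 <= l1 b) -> (forall b, 0 <= l2 b) ->
  admissible (supp l1) -> admissible (supp l2) -> phi l1 = phi l2 -> l1 = l2.
Proof.
move=> n0 h1 h2 a1 a2 e; apply/ffunP => a; apply/eqP; rewrite -subr_eq0 -normr_le0.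
have := coef_close a h1 h2 a1 a2 (lexx 0); rewrite mul0rn; apply => k.
have := fl_close k n0 h1 h2 a1 a2; rewrite e.
by under eq_bigr do rewrite subrr normr0; rewrite big1.
Qed.

Definition steps (R : rcfType) n (f : 'I_n -> R) : {set 'I_n} :=
  [set k | f k != f (ordS k)].

Lemma const_f (R : rcfType) n (f : 'I_n -> R) (k0 : 'I_n) :
  (forall k, f k = f (ordS k)) -> forall k, f k = f k0.
Proof.
move=> H.
have key : forall t k, ccw k0 k = t -> f k = f k0.
  elim=> [|t IH] k hk.
    by have -> : k = k0 by apply: (@ccw_inj _ k0); rewrite hk ccw_id.
  have kns : k != k0 by apply/eqP=> e; move: hk; rewrite e ccw_id.
  have hp : ccw k0 (ord_pred k) = t by rewrite ccw_pred // hk.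
  by rewrite -(IH _ hp) [f (ord_pred k)]H ordS_predK.
by move=> k; exact: key _ k erefl.
Qed.

Lemma fl_shift (R : rcfType) n (l : coords R n) (f : 'I_n -> R) C b k :
  (forall b, 0 <= l b) -> admissible (supp l) -> (forall k, fl l k = f k + C) ->
  0 < l b -> k \in arcset b ->
  l b + f (ord_pred (src b)) <= f k /\ l b + f (snk b) <= f k.
Proof.
move=> h0 ha hC lb kb; have := K1 h0 ha lb kb; rewrite /Mx !hC.
set x := f (ord_pred (src b)); set y := f (snk b).
have m1 : x + C <= Num.max (x + C) (y + C) by rewrite le_max lexx.
have m2 : y + C <= Num.max (x + C) (y + C) by rewrite le_max lexx orbT.
move=> h; split; lra.
Qed.

Lemma exist_fl (R : rcfType) n : (0 < n)%N -> forall f : 'I_n -> R,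
  exists l : coords R n, [/\ forall b, 0 <= l b, admissible (supp l) &
    exists C, forall k, fl l k = f k + C].
Proof.
move=> n0.
suff : forall N f, (#|steps f| <= N)%N -> exists l : coords R n,
    [/\ forall b, 0 <= l b, admissible (supp l) & exists C, forall k, fl l k = f k + C].
  by move=> H f; exact: H _ f (leqnn _).
elim=> [|N IH] f hN.
  have k0 : 'I_n := Ordinal n0.
  have cst : forall k, f k = f k0.
    apply: const_f => k; apply/eqP; apply: contraT => nk.
    have : k \in steps f by rewrite inE.
    by move: hN; rewrite leqn0 cards_eq0 => /eqP->; rewrite inE.
  exists [ffun=> 0]; split.
  - by move=> b; rewrite ffunE.
  - apply/forall_inP=> I; rewrite in_supp ffunE eqxx //.
  - exists (- f k0) => k; rewrite /fl big1 ?cst ?subrr // => b _; by rewrite ffunE.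
case: (set_0Vmem (steps f)) => [e|[w0 w0S]].
  by apply: (IH f); rewrite e cards0.
case: (@arg_maxP _ R _ w0 predT f isT) => km _ kmax.
set c := f km.
have fc : forall k, f k <= c by move=> k; exact: kmax.
have [z fz] : exists z, f z < c.
  case: (boolP [exists z, f z < c]) => [/existsP[z hz]|/existsPn H]; first by exists z.
  have all_c : forall k, f k = c by move=> k; apply/eqP; rewrite eq_le fc /= leNgt H.
  by move: w0S; rewrite inE !all_c eqxx.
have kmc : f km == c by [].
case: (@arg_minnP _ km (fun k => f k == c) (ccw z) kmc) => i /eqP fi imin.
have fzc : f z < c by [].
case: (@arg_minnP _ z (fun k => f k < c) (ccw i) fzc) => j fj jmin.
have ij : i != j by apply/eqP=> e; move: fj; rewrite -e fi ltxx.
have iz : i != z by apply/eqP=> e; move: fz; rewrite -e fi ltxx.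
pose P : carc n := exist _ (i, j) ij.
have srcP : src P = i by [].
have snkP : snk P = j by [].
have fP : forall k, k \in arcset P -> f k = c.
  move=> k; rewrite mem_arc srcP snkP => hk; apply/eqP; rewrite eq_le fc /=.
  rewrite leNgt; apply/negP=> h; have := jmin k h; lia.
have fpi : f (ord_pred i) < c.
  rewrite lt_neqAle fc andbT; apply/negP=> /eqP e.
  have := imin (ord_pred i) (introT eqP e); rewrite ccw_pred //.
  have : ccw z i != 0%N by apply/eqP=> e2; move: iz; rewrite (@ccw_inj _ z i z) ?eqxx // e2 ccw_id.
  lia.
set m := Num.max (f (ord_pred i)) (f j).
have mc : m < c by rewrite /m gt_max fpi fj.
have m1 : f (ord_pred i) <= m by rewrite /m le_max lexx.
have m2 : f j <= m by rewrite /m le_max lexx orbT.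
pose f' := fun k => if k \in arcset P then m else f k.
have f'P : forall k, k \in arcset P -> f' k = m by move=> k kP; rewrite /f' kP.
have f'N : forall k, k \notin arcset P -> f' k = f k by move=> k kP; rewrite /f' (negbTE kP).
have hsub : steps f' \proper steps f.
  apply/properP; split.
    apply/subsetP=> k; rewrite !inE.
    case kP: (k \in arcset P); case sP: (ordS k \in arcset P).
    + by rewrite !f'P // eqxx.
    + have e := ordS_out kP (negbT sP).
      by move=> _; rewrite (fP _ kP) e snkP eq_sym (lt_eqF fj).
    + have e := ordS_in (negbT kP) sP.
      have ek : k = ord_pred i by rewrite -srcP -e ordSK.
      by move=> _; rewrite e srcP fi ek (lt_eqF fpi).
    + by rewrite !f'N ?kP ?sP.
  case: (lerP (f j) (f (ord_pred i))) => hm.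
    have hmx : m = f (ord_pred i) by rewrite /m; apply/max_idPl.
    exists (ord_pred i); rewrite !inE ordS_predK.
      by rewrite fi (lt_eqF fpi).
    have h1 : ord_pred i \notin arcset P by rewrite -srcP pred_src_out.
    have h2 : i \in arcset P by rewrite -srcP src_in.
    by rewrite (f'N _ h1) (f'P _ h2) hmx eqxx.
  have hmx : m = f j by rewrite /m; apply/max_idPr; exact: ltW.
  have h1 : ord_pred j \in arcset P by rewrite -snkP pred_snk_in.
  have h2 : j \notin arcset P by rewrite -snkP snk_out.
  exists (ord_pred j); rewrite !inE ordS_predK.
    by rewrite (fP _ h1) eq_sym (lt_eqF fj).
  by rewrite (f'N _ h2) (f'P _ h1) hmx eqxx.
have hN' : (#|steps f'| <= N)%N.
  by have := proper_card hsub; lia.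
case: (IH f' hN') => l' [l'0 l'a [C' hC']].
have cm0 : 0 < c - m by rewrite subr_gt0.
pose l : coords R n := [ffun a => l' a + (if a == P then c - m else 0)].
exists l; split.
- move=> b; rewrite ffunE; case: (b == P); rewrite ?addr0 //.
  by apply: addr_ge0 => //; exact: ltW.
- have f'pi : f' (ord_pred i) <= m by rewrite f'N ?m1 // -srcP pred_src_out.
  have f'j : f' j <= m by rewrite f'N ?m2 // -snkP snk_out.
  have newc : forall b, l' b != 0 -> b != P -> compatible b P.
    move=> b lb bP.
    have lbp : 0 < l' b by rewrite lt_def lb l'0.
    have hK := fl_shift l'0 l'a hC' lbp.
    have cl : ~~ ((arcset P :&: arcset b != set0) && ~~ (arcset P \subset arcset b)).
      apply/negP => /andP[ne ns]; case: (crossing ne ns) => k [kP skP dif].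
      case kb: (k \in arcset b); case skb: (ordS k \in arcset b); rewrite ?kb ?skb in dif => //.
      + have e := ordS_out kb (negbT skb).
        case: (hK k kb) => _; rewrite -e (f'P _ skP) (f'P _ kP); lra.
      + have e := ordS_in (negbT kb) skb.
        case: (hK _ skb) => h _; move: h; rewrite -e ordSK (f'P _ skP) (f'P _ kP); lra.
    case: (boolP (arcset P \subset arcset b)) => sb.
      apply/or3P; apply: Or32; apply/andP; split.
        rewrite properEneq sb andbT; apply/negP=> /eqP e.
        by move: bP; rewrite (arcset_inj e) eqxx.
      apply/set0Pn; exists (src P); rewrite in_setI src_in andbT.
      by move/subsetP: sb; apply; exact: src_in.
    move: cl; rewrite sb andbT negbK => /eqP dis.
    apply/or3P; apply: Or33; apply/and3P; split.
    + by rewrite -setI_eq0 setIC dis.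
    + apply/eqP=> e; case: (hK _ (pred_snk_in b)) => _.
      rewrite e srcP (f'P _ (_ : i \in arcset P)) ?(src_in P) //; lra.
    + apply/eqP=> e; case: (hK _ (src_in b)) => h _; move: h.
      rewrite -e snkP (f'P _ (_ : ord_pred j \in arcset P)) -?snkP ?pred_snk_in //; lra.
  have lE : forall a, a != P -> l a = l' a by move=> a aP; rewrite ffunE (negbTE aP) addr0.
  apply/forall_inP => I IS; apply/forall_inP => J JS; apply/implyP => IJ.
  move: IJ IS JS; rewrite !in_supp.
  case: (eqVneq I P) => [->|IP]; case: (eqVneq J P) => [->|JP].
  + by [].
  + by move=> _ _; rewrite lE // => lJ; rewrite compatC; exact: newc.
  + by move=> _; rewrite lE // => lI _; exact: newc.
  + move=> IJ; rewrite !lE // => lI lJ; apply: (adm_compat l'a); by rewrite ?in_supp.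
- exists C' => k.
  have -> : fl l k = fl l' k + (c - m) * (k \in arcset P)%:R.
    rewrite !flE (eq_bigr (fun a => l' a * (k \in arcset a)%:R +
       (if a == P then c - m else 0) * (k \in arcset a)%:R)); last first.
      by move=> a _; rewrite ffunE mulrDl.
    rewrite big_split /=; congr (_ + _); rewrite (bigD1 P) //= eqxx big1 ?addr0 //.
    by move=> a aP; rewrite (negbTE aP) mul0r.
  rewrite hC'; case kP: (k \in arcset P).
    by rewrite f'P // fP // mulr1; ring.
  by rewrite f'N ?kP // mulr0 addr0.
Qed.

Definition norm1 (R : rcfType) n (x : 'rV[R]_n) : R := \sum_k `|x 0 k|.

Definition Sk (R : rcfType) n (l : coords R n) (k : 'I_n) : R :=
  \sum_a l a * (src a == k)%:R.
Definition Tk (R : rcfType) n (l : coords R n) (k : 'I_n) : R :=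
  \sum_a l a * (snk a == k)%:R.

Lemma phiST (R : rcfType) n (l : coords R n) k : phi l 0 k = Sk l k - Tk l k.
Proof. by rewrite phiE /Sk /Tk -sumrB; apply: eq_bigr => a _; rewrite mulrBr. Qed.

Lemma sum_indic (R : rcfType) n (i : 'I_n) : \sum_k ((i == k)%:R : R) = 1.
Proof.
rewrite (bigD1 i) //= eqxx big1 ?addr0 // => k ki.
by rewrite eq_sym (negbTE ki).
Qed.

Lemma sum_Sk (R : rcfType) n (l : coords R n) : \sum_k Sk l k = \sum_a l a.
Proof.
rewrite /Sk exchange_big /=; apply: eq_bigr => a _.
by rewrite -mulr_sumr sum_indic mulr1.
Qed.

Lemma sum_Tk (R : rcfType) n (l : coords R n) : \sum_k Tk l k = \sum_a l a.
Proof.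
rewrite /Tk exchange_big /=; apply: eq_bigr => a _.
by rewrite -mulr_sumr sum_indic mulr1.
Qed.

Lemma Sk_ge0 (R : rcfType) n (l : coords R n) k : (forall b, 0 <= l b) -> 0 <= Sk l k.
Proof. by move=> h; apply: sumr_ge0 => a _; apply: mulr_ge0 => //; exact: ler0n. Qed.

Lemma Tk_ge0 (R : rcfType) n (l : coords R n) k : (forall b, 0 <= l b) -> 0 <= Tk l k.
Proof. by move=> h; apply: sumr_ge0 => a _; apply: mulr_ge0 => //; exact: ler0n. Qed.

Lemma sum_phi (R : rcfType) n (l : coords R n) : \sum_k phi l 0 k = 0.
Proof. by under eq_bigr do rewrite phiST; rewrite sumrB sum_Sk sum_Tk subrr. Qed.

Lemma norm1_le (R : rcfType) n (l : coords R n) : (forall b, 0 <= l b) ->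
  norm1 (phi l) <= (\sum_a l a) *+ 2.
Proof.
move=> h; rewrite mulr2n -[X in X + _]sum_Sk -sum_Tk -big_split /=.
apply: ler_sum => k _; rewrite phiST.
apply: (le_trans (ler_normB _ _)).
by rewrite !ger0_norm ?Sk_ge0 ?Tk_ge0.
Qed.

Lemma norm1_adm (R : rcfType) n (l : coords R n) : (forall b, 0 <= l b) ->
  admissible (supp l) -> norm1 (phi l) = (\sum_a l a) *+ 2.
Proof.
move=> h hT; rewrite mulr2n -[X in X + _]sum_Sk -sum_Tk -big_split /=.
apply: eq_bigr => k _; rewrite phiST.
have : Sk l k = 0 \/ Tk l k = 0.
  case: (boolP [exists b, (l b != 0) && (src b == k)]).
    case/existsP=> b /andP[lb /eqP sb]; right; rewrite /Tk big1 // => b' _.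
    case: (eqVneq (l b') 0) => [->|lb']; first by rewrite mul0r.
    case: (eqVneq (snk b') k) => [e|_]; last by rewrite mulr0.
    by case: (conformal hT (_ : b \in supp l) (_ : b' \in supp l) (etrans sb (esym e)));
       rewrite in_supp.
  move/existsPn=> H; left; rewrite /Sk big1 // => b _.
  move: (H b); rewrite negb_and negbK => /orP[/eqP->|/negbTE->]; by rewrite ?mul0r ?mulr0.
case=> ->; rewrite ?subr0 ?sub0r ?normrN ?add0r ?addr0 ger0_norm //.
  exact: Tk_ge0.
exact: Sk_ge0.
Qed.

Lemma realize (R : rcfType) n (x : 'rV[R]_n) : (0 < n)%N -> inH0 x ->
  exists l : coords R n, [/\ forall b, 0 <= l b, admissible (supp l) & phi l = x].
Proof.
move=> n0 hx.
pose F := fun k : 'I_n => \sum_(m : 'I_n | (m <= k)%N) x 0 m.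
have hF : forall k, F k - F (ord_pred k) = x 0 k.
  move=> k; rewrite /F (bigD1 k) //=.
  case: (eqVneq (k : nat) 0%N) => k0.
    have -> : \sum_(m : 'I_n | (m <= ord_pred k)%N) x 0 m = 0.
      rewrite -[RHS]hx; apply: eq_bigl => m; rewrite ord_pred_val k0 /=.
      by have := ltn_ord m; lia.
    rewrite big1 ?addr0 ?subr0 // => m /andP[mk mnk].
    by move: mnk; rewrite ord_eqE; lia.
  have -> : \sum_(m : 'I_n | (m <= k)%N && (m != k)) x 0 m =
            \sum_(m : 'I_n | (m <= ord_pred k)%N) x 0 m.
    apply: eq_bigl => m; rewrite ord_pred_val (negbTE k0) ord_eqE; lia.
  by rewrite addrK.
case: (exist_fl n0 F) => l [l0 la [C hC]].
exists l; split => //; apply/rowP => k.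
by rewrite -flow !hC -(hF k); ring.
Qed.

Lemma inRootE (R : rcfType) n (x : 'rV[R]_n) :
  inRoot x <-> exists l : coords R n, convex_coef l /\ phi l = x.
Proof. by split=> -[mu [h e]]; exists mu; split. Qed.

Lemma phi_add (R : rcfType) n (l1 l2 : coords R n) :
  phi [ffun a => l1 a + l2 a] = phi l1 + phi l2.
Proof.
by rewrite /phi -big_split; apply: eq_bigr => a _; rewrite ffunE scalerDl.
Qed.

Lemma phi_pt (R : rcfType) n (b : carc n) (t : R) :
  phi [ffun a => if a == b then t else 0] = t *: phiv R b.
Proof.
rewrite /phi (bigD1 b) //= ffunE eqxx big1 ?addr0 // => a ab.
by rewrite ffunE (negbTE ab) scale0r.
Qed.

Lemma sum_add (R : rcfType) n (l1 l2 : coords R n) :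
  \sum_a [ffun a => l1 a + l2 a] a = \sum_a l1 a + \sum_a l2 a.
Proof. by rewrite -big_split; apply: eq_bigr => a _; rewrite ffunE. Qed.

Lemma sum_pt (R : rcfType) n (b : carc n) (t : R) :
  \sum_a [ffun a => if a == b then t else 0] a = t.
Proof.
rewrite (bigD1 b) //= ffunE eqxx big1 ?addr0 // => a ab.
by rewrite ffunE (negbTE ab).
Qed.

Lemma Root_H0 (R : rcfType) n (x : 'rV[R]_n) : inRoot x -> inH0 x /\ norm1 x <= 2.
Proof.
case/inRootE=> l [[l0 l1] <-]; split; first exact: sum_phi.
by apply: (le_trans (norm1_le l0)); rewrite l1.
Qed.

Lemma Root_of (R : rcfType) n (x : 'rV[R]_n) : (2 < n)%N ->
  inH0 x -> norm1 x <= 2 -> inRoot x.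
Proof.
move=> n2 hx hn.
have n0 : (0 < n)%N by lia.
case: (realize n0 hx) => l [l0 la e].
have hs : (\sum_a l a) *+ 2 <= 2 by rewrite -norm1_adm // e.
set s := \sum_a l a in hs.
have s0 : 0 <= s by apply: sumr_ge0 => a _.
have i0n : (0 < n)%N by lia.
have i1n : (1 < n)%N by lia.
pose i0 : 'I_n := Ordinal i0n; pose i1 : 'I_n := Ordinal i1n.
have h01 : (i0, i1).1 != (i0, i1).2 by [].
have h10 : (i1, i0).1 != (i1, i0).2 by [].
pose a0 : carc n := exist _ (i0, i1) h01.
pose a1 : carc n := exist _ (i1, i0) h10.
set t := (1 - s) / 2.
pose mu := [ffun a => [ffun a => l a + [ffun a => if a == a0 then t else 0] a] a +
                     [ffun a => if a == a1 then t else 0] a].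
apply/inRootE; exists mu; split; first split.
- move=> a; rewrite !ffunE; apply: addr_ge0; first apply: addr_ge0 => //.
  + by case: (a == a0); rewrite // /t; apply: divr_ge0 => //; rewrite subr_ge0; move: hs; rewrite mulr2n; lra.
  + by case: (a == a1); rewrite // /t; apply: divr_ge0 => //; rewrite subr_ge0; move: hs; rewrite mulr2n; lra.
- by rewrite /mu sum_add sum_add !sum_pt -/s /t; field.
rewrite /mu !phi_add !phi_pt e -addrA -scalerDr.
have -> : phiv R a0 + phiv R a1 = 0.
  by rewrite /phiv /src /snk /=; apply/rowP=> k; rewrite !mxE; ring.
by rewrite scaler0 addr0.
Qed.

Lemma norm1_ge (R : rcfType) n (x : 'rV[R]_n) k : `|x 0 k| <= norm1 x.
Proof.
rewrite /norm1 (bigD1 k) //= lerDl; by apply: sumr_ge0 => m _.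
Qed.

Lemma relint_of (R : rcfType) n (x : 'rV[R]_n) : (2 < n)%N ->
  inH0 x -> norm1 x < 2 -> inRelInt x.
Proof.
move=> n2 hx hn.
set d := 2 - norm1 x.
have d0 : 0 < d by rewrite subr_gt0.
have np : 0 < n%:R + 1 :> R by rewrite ltr_wpDl ?ler0n.
set eps := d / (n%:R + 1).
have e0 : 0 < eps by rewrite divr_gt0.
have eid : eps * n%:R + eps = d by rewrite /eps; field; rewrite gt_eqF.
exists eps => // y hy hyx; apply: Root_of => //.
have : norm1 y <= norm1 x + eps * n%:R.
  have -> : eps * n%:R = \sum_(k : 'I_n) eps by rewrite sumr_const card_ord mulr_natr.
  rewrite /norm1 -big_split /=; apply: ler_sum => k _.
  apply: (le_trans (_ : _ <= `|x 0 k| + `|y 0 k - x 0 k|)).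
    by have := ler_normD (x 0 k) (y 0 k - x 0 k); rewrite addrC subrK addrC.
  by rewrite lerD2l ltW.
rewrite /d in eid; lra.
Qed.

Lemma not_relint (R : rcfType) n (x : 'rV[R]_n) : inRoot x -> norm1 x = 2 -> ~ inRelInt x.
Proof.
move=> hr hn [eps e0 H].
set t := eps / 4.
have t0 : 0 < t by rewrite divr_gt0.
have hy : inH0 ((1 + t) *: x).
  have := (Root_H0 hr).1; rewrite /inH0 => h.
  rewrite (eq_bigr (fun k => (1 + t) * x 0 k)); last by move=> k _; rewrite mxE.
  by rewrite -mulr_sumr h mulr0.
have hc : forall k, `|((1 + t) *: x) 0 k - x 0 k| < eps.
  move=> k; rewrite mxE (_ : (1 + t) * x 0 k - x 0 k = t * x 0 k); last by ring.
  rewrite normrM (ger0_norm (ltW t0)).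
  have := norm1_ge x k; rewrite hn => h.
  have : t * `|x 0 k| <= t * 2 by rewrite ler_pM2l.
  rewrite /t; lra.
have [_ hle] := Root_H0 (H _ hy hc).
move: hle; rewrite /norm1 (eq_bigr (fun k => `|1 + t| * `|x 0 k|)); last first.
  by move=> k _; rewrite mxE normrM.
rewrite -mulr_sumr -/(norm1 x) hn ger0_norm; last by rewrite addr_ge0 // ltW.
lra.
Qed.

Lemma boundaryE (R : rcfType) n (x : 'rV[R]_n) : (2 < n)%N ->
  inBoundary x <-> inH0 x /\ norm1 x = 2.
Proof.
move=> n2; split.
  case=> hr hni; have [h0 hle] := Root_H0 hr; split => //.
  apply/eqP; rewrite eq_le hle /= leNgt; apply/negP => hlt.
  exact: hni (relint_of n2 h0 hlt).
case=> h0 h2.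
have hr : inRoot x by apply: Root_of => //; rewrite h2.
by split => //; exact: not_relint.
Qed.

Lemma supp_nonempty (R : rcfType) n (l : coords R n) : convex_coef l -> supp l != set0.
Proof.
case=> _ h1; apply/negP=> /eqP e.
have : \sum_a l a = 0.
  apply: big1 => a _; apply/eqP; apply: contraT => la.
  have : a \in supp l by rewrite in_supp.
  by rewrite e inE.
by rewrite h1 => /eqP; rewrite oner_eq0.
Qed.

Lemma real_of (R : rcfType) n (S : {set carc n}) (l : coords R n) :
  simplex S -> inSimplexPts S l -> inRealization l.
Proof.
case/andP=> _ hS [hc hsub]; split => //; apply/andP; split.
  exact: supp_nonempty.
exact: adm_sub hsub hS.
Qed.

Lemma clause2 (R : rcfType) n (x : 'rV[R]_n) : (2 < n)%N ->
  inBoundary x <-> exists l : coords R n, inRealization l /\ phi l = x.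
Proof.
move=> n2; rewrite boundaryE //; split.
  case=> h0 h2; case: (realize (_ : (0 < n)%N) h0) => [|l [l0 la e]]; first lia.
  have hs : \sum_a l a = 1.
    by move: h2; rewrite -e norm1_adm // mulr2n; lra.
  exists l; split => //; split; first by split.
  by rewrite /simplex la andbT supp_nonempty.
case=> l [[[l0 l1] /andP[_ la]] <-]; split; first exact: sum_phi.
by rewrite norm1_adm // l1.
Qed.

Lemma clause1 (R : rcfType) n (l1 l2 : coords R n) : (2 < n)%N ->
  inRealization l1 -> inRealization l2 -> phi l1 = phi l2 -> l1 = l2.
Proof.
move=> n2 [[h1 _] /andP[_ a1]] [[h2 _] /andP[_ a2]]; apply: uniq_coef => //; lia.
Qed.

Lemma clause5 n (a : carc n) : simplex [set a].
Proof.
rewrite /simplex; apply/andP; split.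
  by apply/set0Pn; exists a; rewrite inE.
apply/forall_inP => I; rewrite inE => /eqP->; apply/forall_inP => J; rewrite inE => /eqP->.
by rewrite eqxx.
Qed.

Lemma clause6 (R : rcfType) n : injective (@phiv R n).
Proof.
move=> a b e.
have h1 := congr1 (fun v : 'rV[R]_n => v 0 (src a)) e.
have h2 := congr1 (fun v : 'rV[R]_n => v 0 (snk a)) e.
move: h1 h2; rewrite /= !phivE !eqxx.
have nas : (snk a == src a) = false by apply/negbTE; move: (src_snk_neq a); rewrite eq_sym.
have nsa : (src a == snk a) = false by apply/negbTE; move: (src_snk_neq a).
rewrite nas nsa /=.
case: (eqVneq (src b) (src a)) => e1; case: (eqVneq (snk b) (src a)) => e2;
case: (eqVneq (src b) (snk a)) => e3; case: (eqVneq (snk b) (snk a)) => e4;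
  rewrite /= ?mulr1n ?mulr0n ?subr0 ?sub0r => h1 h2; try (exfalso; move: h1 h2; lra).
apply/val_inj; move: e1 e4; rewrite /src /snk; case: (val a) => ??; case: (val b) => ?? /= -> -> //.
Qed.

Lemma clause8 (R : rcfType) n (S : {set carc n}) (mu : coords R n) : (2 < n)%N ->
  simplex S -> supp mu \subset S -> \sum_a mu a = 0 -> \sum_a mu a *: phiv R a = 0 ->
  mu = 0.
Proof.
move=> n2 /andP[_ hS] hsub _ he.
pose mp : coords R n := [ffun a => if 0 <= mu a then mu a else 0].
pose mn : coords R n := [ffun a => if 0 <= mu a then 0 else - mu a].
have mp0 : forall b, 0 <= mp b by move=> b; rewrite ffunE; case: ifP.
have mn0 : forall b, 0 <= mn b.
  by move=> b; rewrite ffunE; case: ifP => // /negbT; rewrite -ltNge oppr_ge0 => /ltW.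
have dec : forall a, mu a = mp a - mn a.
  by move=> a; rewrite !ffunE; case: ifP; rewrite ?subr0 ?sub0r ?opprK.
have sp : supp mp \subset S.
  apply: subset_trans hsub; apply/subsetP=> a; rewrite !in_supp ffunE.
  by case: ifP => _ //; rewrite eqxx.
have sn : supp mn \subset S.
  apply: subset_trans hsub; apply/subsetP=> a; rewrite !in_supp ffunE.
  by case: ifP => _; rewrite ?eqxx // oppr_eq0.
have e : phi mp = phi mn.
  apply/eqP; rewrite -subr_eq0 /phi -sumrB -[X in _ == X]he; apply/eqP.
  by apply: eq_bigr => a _; rewrite -scalerBl -dec.
have := uniq_coef (_ : (0 < n)%N) mp0 mn0 (adm_sub sp hS) (adm_sub sn hS) e.
move=> /(_ ltac:(lia)) emn; apply/ffunP => a; rewrite dec emn subrr ffunE //.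
Qed.

Lemma clause9 (R : rcfType) n (S T : {set carc n}) (x : 'rV[R]_n) : (2 < n)%N ->
  simplex S -> simplex T -> (inImage S x /\ inImage T x <-> inImage (S :&: T) x).
Proof.
move=> n2 hS hT; split.
  case=> [[l1 [h1 e1]] [l2 [h2 e2]]].
  have r1 := real_of hS h1; have r2 := real_of hT h2.
  have el := clause1 n2 r1 r2 (etrans e1 (esym e2)).
  exists l1; split => //; case: h1 => hc1 s1; split => //.
  by rewrite subsetI s1 el; case: h2.
case=> l [[hc hs] e]; split; exists l; split => //; split => //.
  exact: subset_trans hs (subsetIl _ _).
exact: subset_trans hs (subsetIr _ _).
Qed.

Lemma clause10 (R : rcfType) n (x : 'rV[R]_n) : (2 < n)%N ->
  inBoundary x <-> exists2 S : {set carc n}, simplex S & inImage S x.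
Proof.
move=> n2; rewrite clause2 //; split.
  case=> l [hl e]; exists (supp l); first by case: hl.
  by exists l; split => //; split => //; case: hl.
case=> S hS [l [hl e]]; exists l; split => //; exact: real_of hS hl.
Qed.

Lemma indic_bound (R : rcfType) (b1 b2 : bool) : `|(b1%:R - b2%:R : R)| <= 1.
Proof. by case: b1; case: b2; rewrite /= ?subrr ?normr0 ?subr0 ?sub0r ?normrN ?normr1. Qed.

Lemma clause3 (R : rcfType) n (l : coords R n) : inRealization l ->
  forall eps : R, 0 < eps ->
     exists2 delta : R, 0 < delta & forall l' : coords R n, inRealization l' ->
       (forall a, `|l' a - l a| < delta) ->
       forall k, `|phi l' 0 k - phi l 0 k| < eps.
Proof.
move=> _ eps e0.
set N := #|{: carc n}|%:R : R.
have Np : 0 < N + 1 by rewrite ltr_wpDl ?ler0n.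
exists (eps / (N + 1)); first by rewrite divr_gt0.
move=> l' _ H k.
rewrite !phiE -sumrB.
apply: (le_lt_trans (ler_norm_sum _ _ _)).
apply: (le_lt_trans (_ : _ <= \sum_(a : carc n) eps / (N + 1))).
  apply: ler_sum => a _; rewrite -mulrBl normrM.
  apply: (le_trans (_ : _ <= `|l' a - l a| * 1)).
    by rewrite ler_wpM2l ?normr_ge0 ?indic_bound.
  by rewrite mulr1 ltW.
rewrite sumr_const -/N -mulr_natr.
change (eps / (N + 1) * N < eps).
have : eps / (N + 1) * N + eps / (N + 1) = eps by field; rewrite gt_eqF.
have : 0 < eps / (N + 1) by rewrite divr_gt0.
lra.
Qed.

Lemma clause4 (R : rcfType) n (l : coords R n) : (2 < n)%N -> inRealization l ->
  forall eps : R, 0 < eps ->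
     exists2 delta : R, 0 < delta & forall l' : coords R n, inRealization l' ->
       (forall k, `|phi l' 0 k - phi l 0 k| < delta) ->
       forall a, `|l' a - l a| < eps.
Proof.
move=> n2 [[l0 _] /andP[_ la]] eps e0.
set N := n%:R : R.
have Np : 0 < N *+ 2 + 1 by rewrite ltr_wpDl ?ler0n // mulrn_wge0 // ler0n.
set delta := eps / (N *+ 2 + 1).
have d0 : 0 < delta by rewrite divr_gt0.
exists delta => // l' [[l'0 _] /andP[_ l'a]] H a.
set d := \sum_m `|phi l' 0 m - phi l 0 m|.
have dle : d <= delta * N.
  have -> : delta * N = \sum_(m : 'I_n) delta by rewrite sumr_const card_ord mulr_natr.
  by apply: ler_sum => m _; exact: ltW.
have d0' : 0 <= d by apply: sumr_ge0 => m _.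
have n0 : (0 < n)%N by lia.
have h := coef_close a l'0 l0 l'a la d0' (fun k => fl_close k n0 l'0 l0 l'a la).
have eid : delta * (N *+ 2) + delta = eps.
  rewrite /delta; field; apply: lt0r_neq0; move: Np; rewrite /N mulr2n; lra.
move: h eid; rewrite !mulr2n; lra.
Qed.

Lemma phi_coord (R : rcfType) n (l : coords R n) k :
  phi l 0 k = \sum_a l a * phiv R a 0 k.
Proof. by rewrite /phi summxE; apply: eq_bigr => a _; rewrite mxE. Qed.

Lemma dotv_phi (R : rcfType) n (c : 'rV[R]_n) (l : coords R n) :
  dotv c (phi l) = \sum_a l a * dotv c (phiv R a).
Proof.
rewrite /dotv; under eq_bigr do rewrite phi_coord mulr_sumr.
rewrite exchange_big /=; apply: eq_bigr => a _; rewrite mulr_sumr.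
by apply: eq_bigr => k _; ring.
Qed.

Lemma phiv_Root (R : rcfType) n (a : carc n) : inRoot (phiv R a).
Proof.
apply/inRootE; exists [ffun b => if b == a then 1 else 0]; split.
  split; first by move=> b; rewrite ffunE; case: ifP.
  exact: sum_pt.
by rewrite phi_pt scale1r.
Qed.

Lemma clause11 (R : rcfType) n (c : 'rV[R]_n) (b : R) : (2 < n)%N ->
  supportingProper c b ->
     forall x : 'rV[R]_n, inFace c b x ->
       exists S : {set carc n}, [/\ simplex S, inImage S x &
         forall y, inImage S y -> inFace c b y].
Proof.
move=> n2 [hsup [y0 [ry0 lty0]]] x [rx ex].
have bx : inBoundary x.
  split => //; case=> eps e0 H.
  set t := eps / 8.
  have t0 : 0 < t by rewrite divr_gt0.
  set w := x + t *: (x - y0).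
  have [hx0 nx] := Root_H0 rx; have [hy0 ny] := Root_H0 ry0.
  have hw : inH0 w.
    rewrite /inH0 (eq_bigr (fun k => x 0 k + t * (x 0 k - y0 0 k))); last first.
      by move=> k _; rewrite !mxE.
    rewrite big_split /= -mulr_sumr sumrB.
    by move: hx0 hy0; rewrite /inH0 => -> ->; rewrite subrr mulr0 addr0.
  have hc : forall k, `|w 0 k - x 0 k| < eps.
    move=> k; rewrite !mxE (_ : x 0 k + t * (x 0 k + - y0 0 k) - x 0 k = t * (x 0 k - y0 0 k)); last by ring.
    rewrite normrM (ger0_norm (ltW t0)).
    have h1 := norm1_ge x k; have h2 := norm1_ge y0 k.
    have h3 := ler_normB (x 0 k) (y0 0 k).
    have : t * `|x 0 k - y0 0 k| <= t * 4.
      by rewrite ler_pM2l //; lra.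
    rewrite /t; lra.
  have := hsup _ (H _ hw hc).
  have -> : dotv c w = dotv c x + t * (dotv c x - dotv c y0).
    rewrite /dotv (eq_bigr (fun k => c 0 k * x 0 k + t * (c 0 k * x 0 k - c 0 k * y0 0 k))).
      by rewrite big_split /= -mulr_sumr sumrB.
    by move=> k _; rewrite !mxE; ring.
  rewrite ex => h.
  have : 0 < t * (b - dotv c y0) by rewrite mulr_gt0 // subr_gt0.
  lra.
case/(clause2 _ n2): bx => l [hl e].
have hl' := hl; case: hl' => [[l0 l1] hS].
exists (supp l); split => //.
  by exists l; split => //; split => //; case: hl.
have dv : forall a, l a != 0 -> dotv c (phiv R a) = b.
  have hs : \sum_a l a * (b - dotv c (phiv R a)) = 0.
    under eq_bigr do rewrite mulrBr.
    by rewrite sumrB -dotv_phi e ex -mulr_suml l1 mul1r subrr.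
  move=> a la.
  have := psumr_eq0P (P := predT) (F := fun a => l a * (b - dotv c (phiv R a))) _ hs (isT : predT a).
    move=> /(_ _)/eqP; rewrite mulf_eq0 (negbTE la) /= subr_eq0 => H; apply/eqP; rewrite eq_sym H //.
  move=> i _; apply: mulr_ge0 => //; rewrite subr_ge0; apply: hsup; exact: phiv_Root.
move=> y [mu [[[m0 m1] msub] ey]].
split; first by apply/inRootE; exists mu.
rewrite -ey dotv_phi -[RHS]mul1r -m1 mulr_suml; apply: eq_bigr => a _.
case: (eqVneq (mu a) 0) => [->|ma]; first by rewrite !mul0r.
rewrite dv //; rewrite -in_supp; apply: (subsetP msub); by rewrite in_supp.
Qed.

Lemma split2 (R : rcfType) n (F : 'I_n -> R) (i j : 'I_n) : i != j ->
  \sum_k F k = F i + F j + \sum_(k | (k != i) && (k != j)) F k.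
Proof.
move=> ij; rewrite (bigD1 i) //= (bigD1 j) /=; last by rewrite eq_sym.
rewrite addrA; congr (_ + _); apply: eq_bigl => k; by rewrite andbC.
Qed.

Lemma vert_eq (R : rcfType) n (a : carc n) (w : 'rV[R]_n) : inRoot w ->
  w 0 (src a) - w 0 (snk a) = 2 -> w = phiv R a.
Proof.
move=> hw hg; have [h0 hn] := Root_H0 hw.
have ij : src a != snk a by exact: (src_snk_neq a).
set i := src a; set j := snk a; rewrite -/i -/j in hg ij.
set rest := \sum_(k | (k != i) && (k != j)) `|w 0 k|.
have hr0 : 0 <= rest by apply: sumr_ge0.
have hsp : norm1 w = `|w 0 i| + `|w 0 j| + rest by rewrite /norm1 (split2 _ ij).
have h1 : w 0 i - w 0 j <= `|w 0 i| + `|w 0 j|.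
  have := ler_normB (w 0 i) (w 0 j); have := ler_norm (w 0 i - w 0 j); lra.
have r0 : rest = 0 by lra.
have wk : forall k, k != i -> k != j -> w 0 k = 0.
  move=> k ki kj; apply/eqP; rewrite -normr_eq0 eq_le normr_ge0 andbT -r0.
  by rewrite /rest (bigD1 k) /= ?ki ?kj //= lerDl; apply: sumr_ge0.
have : w 0 i + w 0 j = 0.
  move: h0; rewrite /inH0 (split2 _ ij) big1 ?addr0 //.
  by move=> k /andP[ki kj]; exact: wk.
move=> hs; apply/rowP => k; rewrite phivE.
case: (eqVneq k i) => [->|ki].
  by rewrite -/i -/j (eq_sym j) (negbTE ij) /= ?mulr1n ?mulr0n; lra.
case: (eqVneq k j) => [->|kj].
  by rewrite /= ?mulr1n ?mulr0n; lra.
by rewrite wk // subrr.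
Qed.

Lemma vert_of (R : rcfType) n (a : carc n) : isVertexRoot (phiv R a).
Proof.
split; first exact: phiv_Root.
move=> y z t ry rz t0 t1 e.
set i := src a; set j := snk a.
have ij : i != j by exact: (src_snk_neq a).
have gbound : forall w : 'rV[R]_n, inRoot w -> w 0 i - w 0 j <= 2.
  move=> w hw; have [_ hn] := Root_H0 hw.
  move: hn; rewrite /norm1 (split2 _ ij) => hn.
  have : 0 <= \sum_(k | (k != i) && (k != j)) `|w 0 k| by apply: sumr_ge0.
  have := ler_normB (w 0 i) (w 0 j); have := ler_norm (w 0 i - w 0 j); lra.
have ex : forall k, phiv R a 0 k = t * y 0 k + (1 - t) * z 0 k.
  by move=> k; rewrite e !mxE.
have gx : phiv R a 0 i - phiv R a 0 j = 2.
  rewrite !phivE eqxx (negbTE ij) eq_sym (negbTE ij) eqxx /=; ring.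
rewrite !ex in gx.
have gy := gbound _ ry; have gz := gbound _ rz.
have p1 : 0 <= t * (2 - (y 0 i - y 0 j)).
  by apply: mulr_ge0; rewrite ?subr_ge0 ?(ltW t0).
have p2 : 0 <= (1 - t) * (2 - (z 0 i - z 0 j)).
  by apply: mulr_ge0; rewrite ?subr_ge0 ?(ltW t1).
have s0 : t * (2 - (y 0 i - y 0 j)) + (1 - t) * (2 - (z 0 i - z 0 j)) = 0.
  transitivity (2 - ((t * y 0 i + (1 - t) * z 0 i) - (t * y 0 j + (1 - t) * z 0 j))).
    by ring.
  by rewrite gx subrr.
have q1 : t * (2 - (y 0 i - y 0 j)) = 0 by lra.
have q2 : (1 - t) * (2 - (z 0 i - z 0 j)) = 0 by lra.
move: q1 q2 => /eqP; rewrite mulf_eq0 (gt_eqF t0) /= subr_eq0 => /eqP hy.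
move=> /eqP; rewrite mulf_eq0 [1 - t == 0]subr_eq0 (gt_eqF t1) /= subr_eq0 => /eqP hz.
by split; apply: vert_eq => //; rewrite -?hy -?hz.
Qed.

Lemma vert_is (R : rcfType) n (x : 'rV[R]_n) : isVertexRoot x -> exists a : carc n, x = phiv R a.
Proof.
case=> /inRootE [mu [[m0 m1] ex]] hv.
have [a ma] : exists a, 0 < mu a.
  case: (boolP [exists a, 0 < mu a]) => [/existsP[a h]|/existsPn H]; first by exists a.
  move: m1; rewrite big1 => [/eqP|b _]; first by rewrite eq_sym oner_eq0.
  by apply/eqP; rewrite eq_le m0 andbT leNgt H.
have ma1 : mu a <= 1.
  by rewrite -m1 (bigD1 a) //= lerDl; apply: sumr_ge0.
set s := mu a / 2.
have s0 : 0 < s by rewrite divr_gt0.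
have s1 : s < 1 by rewrite /s; lra.
have s1' : 1 - s != 0 by rewrite subr_eq0 eq_sym lt_eqF.
pose mu' : coords R n := [ffun b => (mu b - (if b == a then s else 0)) / (1 - s)].
have hz : inRoot (phi mu').
  apply/inRootE; exists mu'; split => //; split.
    move=> b; rewrite ffunE; apply: divr_ge0; last by rewrite subr_ge0 ltW.
    by case: ifP => [/eqP->|_]; rewrite ?subr0 // /s; lra.
  rewrite (eq_bigr (fun b => (mu b - (if b == a then s else 0)) / (1 - s))); last first.
    by move=> b _; rewrite ffunE.
  rewrite -mulr_suml sumrB m1.
  have -> : \sum_b (if b == a then s else 0) = s.
    by rewrite (bigD1 a) //= eqxx big1 ?addr0 // => b /negbTE->.
  by rewrite divff.
have st : 0 < s < 1 by rewrite s0 s1.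
case/andP: st => st0 st1.
have eq : x = s *: phiv R a + (1 - s) *: phi mu'.
  apply/rowP => k; rewrite -ex [RHS]mxE [X in _ = X + _]mxE [X in _ = _ + X]mxE.
  have -> : (1 - s) * phi mu' 0 k = phi mu 0 k - s * phiv R a 0 k.
    rewrite !phi_coord mulr_sumr.
    rewrite (eq_bigr (fun b => mu b * phiv R b 0 k - (if b == a then s else 0) * phiv R b 0 k)).
      rewrite sumrB; congr (_ - _).
      by rewrite (bigD1 a) //= eqxx big1 ?addr0 // => b /negbTE->; rewrite mul0r.
    move=> b _; rewrite ffunE; field.
    exact: s1'.
  by rewrite addrC subrK.
by exists a; have [-> _] := hv _ _ s (phiv_Root R a) hz st0 st1 eq.
Qed.

Unset Implicit Arguments.
Theorem mainTheorem5 (R : rcfType) (n : nat) (hn : (3 <= n)%N) :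
  (* phi_n is injective on |K_n| *)
  (forall l1 l2 : coords R n, inRealization l1 -> inRealization l2 ->
     phi l1 = phi l2 -> l1 = l2) /\
  (* phi_n maps |K_n| onto the relative boundary of Root_n *)
  (forall x : 'rV[R]_n,
     inBoundary x <-> exists l : coords R n, inRealization l /\ phi l = x) /\
  (* phi_n is continuous (sup norms) *)
  (forall l : coords R n, inRealization l -> forall eps : R, 0 < eps ->
     exists2 delta : R, 0 < delta & forall l' : coords R n, inRealization l' ->
       (forall a, `|l' a - l a| < delta) ->
       forall k, `|phi l' 0 k - phi l 0 k| < eps) /\
  (* its inverse on the boundary is continuous: phi_n is a homeomorphism *)
  (forall l : coords R n, inRealization l -> forall eps : R, 0 < eps ->
     exists2 delta : R, 0 < delta & forall l' : coords R n, inRealization l' ->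
       (forall k, `|phi l' 0 k - phi l 0 k| < delta) ->
       forall a, `|l' a - l a| < eps) /\
  (* vertices of K_n go bijectively onto the vertices of Root_n *)
  (forall a : carc n, simplex [set a]) /\
  injective (@phiv R n) /\
  (forall x : 'rV[R]_n, isVertexRoot x <-> exists a : carc n, x = phiv R a) /\
  (* images of simplices are nondegenerate geometric simplices *)
  (forall (S : {set carc n}) (mu : coords R n), simplex S ->
     supp mu \subset S -> \sum_a mu a = 0 -> \sum_a mu a *: phiv R a = 0 ->
     mu = 0) /\
  (* any two of them meet in the image of their common face *)
  (forall (S T : {set carc n}) (x : 'rV[R]_n), simplex S -> simplex T ->
     (inImage S x /\ inImage T x <-> inImage (S :&: T) x)) /\
  (* they cover exactly the boundary of Root_n *)
  (forall x : 'rV[R]_n,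
     inBoundary x <-> exists2 S : {set carc n}, simplex S & inImage S x) /\
  (* every proper face of Root_n is a union of images of simplices *)
  (forall (c : 'rV[R]_n) (b : R), supportingProper c b ->
     forall x : 'rV[R]_n, inFace c b x ->
       exists S : {set carc n}, [/\ simplex S, inImage S x &
         forall y, inImage S y -> inFace c b y]).
Proof.
have n2 : (2 < n)%N by [].
split; first by move=> l1 l2 h1 h2 e; exact: clause1 n2 h1 h2 e.
split; first by move=> x; exact: clause2 x n2.
split; first by move=> l hl; exact: clause3 hl.
split; first by move=> l hl; exact: clause4 n2 hl.
split; first exact: clause5.
split; first exact: clause6.
split; first by move=> x; split; [exact: vert_is | case=> a ->; exact: vert_of].
split; first by move=> S mu hS hs h1 h2; exact: clause8 n2 hS hs h1 h2.
split; first by move=> S T x hS hT; exact: clause9 x n2 hS hT.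
split; first by move=> x; exact: clause10 x n2.
by move=> c b hsp x hx; exact: clause11 n2 hsp x hx.
Qed.
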